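(* An FDS $A$ is cancellative, i.e. for all FDSs $B,C$ the equality $AB=AC$ implies $B=C$, if and only if $A$ has a fixpoint (a state $s\in S_A$ with $A(s)=s$).
   Context: A finite dynamical system (FDS) is a function $A:S_A\to S_A$ on a finite set $S_A$ (possibly empty). FDSs are considered up to isomorphism: $A=B$ means that their functional graphs (vertex set $S_A$, one arc $x\to A(x)$ for each $x$) are isomorphic digraphs. The product $AB$ of two FDSs is the function on $S_A\times S_B$ given by $(a,b)\mapsto (A(a),B(b))$. *)

(* Defs.v *)
From mathcomp Require Import all_boot.
Set Implicit Arguments. Unset Strict Implicit. Unset Printing Implicit Defensive.

Record FDS := MkFDS { state : finType; dyn : state -> state }.
Arguments dyn : clear implicits.

(* A = B up to isomorphism of functional graphs: a bijection conjugating
   the two functions. *)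
Definition fds_iso (A B : FDS) : Prop :=
  exists h : state A -> state B,
    bijective h /\ forall x, h (dyn A x) = dyn B (h x).

Definition fds_prod (A B : FDS) : FDS :=
  @MkFDS (state A * state B)%type (fun p => (dyn A p.1, dyn B p.2)).

Definition cancellative (A : FDS) : Prop :=
  forall B C : FDS, fds_iso (fds_prod A B) (fds_prod A C) -> fds_iso B C.

Definition has_fixpoint (A : FDS) : Prop := exists s : state A, dyn A s = s.

(* Main.v *)
Require Import Defs.
From mathcomp Require Import all_boot.


Definition ishom (X Y : FDS) (f : {ffun state X -> state Y}) : bool :=
  [forall x, f (dyn X x) == dyn Y (f x)].
Definition kerf (X Y : FDS) (f : {ffun state X -> state Y}) : {set state X * state X} :=
  [set p | f p.1 == f p.2].
Definition Gc (X Y : FDS) (th : {set state X * state X}) :=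
  #|[set f : {ffun state X -> state Y} | ishom _ _ f && (th \subset kerf _ _ f)]|.
Definition Kc (X Y : FDS) (th : {set state X * state X}) :=
  #|[set f : {ffun state X -> state Y} | ishom _ _ f && (kerf _ _ f == th)]|.

Lemma G_K X Y th : Gc X Y th = \sum_(th' : {set state X * state X} | th \subset th') Kc X Y th'.
Proof.
rewrite /Gc -sum1_card (partition_big (kerf X Y) (fun th' => th \subset th')).
  apply: eq_bigr => th' sth; rewrite /Kc -sum1_card; apply: eq_bigl => f.
  rewrite !inE; case: (ishom _ _ f) => //=.
  by case: eqP => [->|]; rewrite ?andbF ?andbT.
by move=> f; rewrite inE => /andP[].
Qed.

Lemma K_uniq X B C : (forall th, Gc X B th = Gc X C th) ->
  forall th, Kc X B th = Kc X C th.
Proof.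
move=> HG th; have [n] := ubnP #|~: th|; elim: n th => // n IH th Hn.
have eB := G_K X B th; have eC := G_K X C th.
rewrite (bigD1 th) //= in eB; rewrite (bigD1 th) //= in eC.
suff eS : \sum_(i : {set state X * state X} | (th \subset i) && (i != th)) Kc X B i =
          \sum_(i : {set state X * state X} | (th \subset i) && (i != th)) Kc X C i.
  by move: eB eC; rewrite HG eS => -> /addIn.
apply: eq_bigr => th' /andP[s ne]; apply: IH.
have pr : th \proper th' by rewrite properEneq eq_sym ne s.
rewrite -properC in pr; move: (proper_card pr) => lt.
by apply: leq_trans lt _; rewrite -ltnS.
Qed.

Lemma G_prod X A B th : Gc X (fds_prod A B) th = Gc X A th * Gc X B th.
Proof.
rewrite /Gc -cardsX.
pose F (f : {ffun state X -> state (fds_prod A B)}) :=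
  ([ffun x => (f x).1] : {ffun state X -> state A}, [ffun x => (f x).2] : {ffun state X -> state B}).
have Finj : injective F.
  move=> f g [] /ffunP e1 /ffunP e2; apply/ffunP => x.
  move: (e1 x) (e2 x); rewrite !ffunE.
  by case: (f x) (g x) => [? ?] [? ?] /= -> ->.
rewrite -(card_imset _ Finj); apply: eq_card; case=> g1 g2.
rewrite !inE; apply/imsetP/idP => [[f]|].
  rewrite inE => /andP[/forallP hf sf] [-> ->] /=.
  apply/andP; split; apply/andP; split.
  - by apply/forallP => x; rewrite !ffunE; move/eqP: (hf x) => ->.
  - apply/subsetP => p /(subsetP sf); rewrite !inE !ffunE => /eqP -> //.
  - by apply/forallP => x; rewrite !ffunE; move/eqP: (hf x) => ->.
  - apply/subsetP => p /(subsetP sf); rewrite !inE !ffunE => /eqP -> //.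
move=> /andP[/andP[/forallP h1 s1] /andP[/forallP h2 s2]].
exists ([ffun x => (g1 x, g2 x)] : {ffun state X -> state (fds_prod A B)}).
  rewrite inE; apply/andP; split.
    by apply/forallP => x; rewrite !ffunE /= (eqP (h1 x)) (eqP (h2 x)).
  apply/subsetP => p pt; move: (subsetP s1 p pt) (subsetP s2 p pt).
  by rewrite !inE !ffunE => /eqP -> /eqP ->.
by rewrite /F; congr (_, _); apply/ffunP => x; rewrite !ffunE.
Qed.

Lemma G_iso X Y Z th : fds_iso Y Z -> Gc X Y th <= Gc X Z th.
Proof.
move=> [h [hb hh]].
pose F (f : {ffun state X -> state Y}) := [ffun x => h (f x)] : {ffun state X -> state Z}.
have Finj : injective F.
  move=> f g /ffunP e; apply/ffunP => x; move: (e x).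
  by rewrite !ffunE; apply: bij_inj.
rewrite /Gc -(card_imset _ Finj); apply: subset_leq_card.
apply/subsetP => k /imsetP[f]; rewrite !inE => /andP[/forallP hf sf] -> ; rewrite /F.
apply/andP; split.
  by apply/forallP => x; rewrite !ffunE (eqP (hf x)) hh.
apply/subsetP => p /(subsetP sf); rewrite !inE !ffunE => /eqP -> //.
Qed.

Lemma iso_sym Y Z : fds_iso Y Z -> fds_iso Z Y.
Proof.
move=> [h [[g hg gh] hh]]; exists g; split; first by exists h.
move=> z; apply: (can_inj hg); by rewrite hh !gh.
Qed.

Lemma G_pos X A th : has_fixpoint A -> 0 < Gc X A th.
Proof.
move=> [s hs]; apply/card_gt0P; exists [ffun _ => s].
rewrite inE; apply/andP; split; first by apply/forallP => x; rewrite !ffunE hs.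
by apply/subsetP => p _; rewrite inE !ffunE.
Qed.

Lemma dir1 A : has_fixpoint A -> cancellative A.
Proof.
move=> HA B C iso.
have HG : forall X th, Gc X B th = Gc X C th.
  move=> X th; apply/eqP; rewrite -(eqn_pmul2l (G_pos X A th HA)) -!G_prod eqn_leq.
  by rewrite !G_iso //; apply: iso_sym.
have inj_ex : forall Y Z : FDS, (forall X th, Gc X Y th = Gc X Z th) ->
    exists f : {ffun state Y -> state Z}, ishom _ _ f && injectiveb f.
  move=> Y Z H; pose diag := [set p : state Y * state Y | p.1 == p.2].
  have : 0 < Kc Y Z diag.
    rewrite -(@K_uniq Y Y Z (H Y)); apply/card_gt0P; exists [ffun y => y].
    rewrite inE; apply/andP; split; first by apply/forallP => y; rewrite !ffunE.
    by apply/eqP/setP => p; rewrite !inE !ffunE.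
  case/card_gt0P => f; rewrite inE => /andP[hf /eqP kf]; exists f; rewrite hf /=.
  apply/injectiveP => x y e; have : (x, y) \in kerf Y Z f by rewrite inE e.
  by rewrite kf inE => /eqP.
have [f /andP[hf /injectiveP fi]] := inj_ex B C HG.
have [g /andP[_ /injectiveP gi]] := inj_ex C B (fun X th => esym (HG X th)).
exists f; split; first by apply: inj_card_bij fi _; apply: leq_card gi.
by move=> x; apply/eqP; move/forallP: hf.
Qed.

Section NoFix.
Variable A : FDS.
Local Notation T := (state A).
Local Notation f := (dyn A).

Definition cyc (a : T) := iter #|T| f a.
Definition rep (c : T) : T := odflt c [pick y | fconnect f c y && fconnect f y c].
Definition rho a := rep (cyc a).
Definition shiftv (r c : T) (b : bool) (v : T) :=
  if b then iter (findex f c r) f v else iter (findex f r c) f v.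
Definition PT := ({set T} * {ffun T -> T})%type.
Definition phiT (r c : T) (p : PT) : PT :=
  (if r \in p.1 then p.1 :\ r else r |: p.1,
   [ffun q => if q == r then shiftv r c (r \in p.1) (p.2 q) else p.2 q]).
Definition okp (b : bool) (p : PT) :=
  (odd #|p.1| == b) && [forall q, fconnect f q (p.2 q)].
Definition stepT (p : PT) : PT :=
  (p.1, [ffun q => if q \in p.1 then f (p.2 q) else p.2 q]).

Lemma iter_comm k s z : iter k f (iter s f z) = iter s f (iter k f z).
Proof. by rewrite -!iterD addnC. Qed.

Lemma fconn_iter x v k : fconnect f x v -> fconnect f x (iter k f v).
Proof. by move=> h; apply: connect_trans h (fconnect_iter _ _ _). Qed.

Lemma cyc_cyclic a : fconnect f (f (cyc a)) (cyc a).
Proof.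
pose g (i : 'I_#|T|.+1) := iter i f a.
have : ~~ injectiveb g.
  apply/negP => /injectiveP gi; have := leq_card g gi; by rewrite card_ord ltnn.
case/injectivePn => i [j ne e].
wlog lt : i j ne e / i < j.
  move=> W; case: (ltngtP i j) => [l|l|/val_inj l]; first exact: W l.
    by apply: (W j i) => //; rewrite eq_sym.
  by rewrite l eqxx in ne.
have key : forall m, i <= m -> iter ((j - i) + m) f a = iter m f a.
  move=> m im; rewrite -(subnK im) addnA (addnC (j - i)) !iterD.
  by congr iter; rewrite -iterD subnK ?(ltnW lt) // -e.
have hj : j <= #|T| by rewrite -ltnS.
have hc : iter (j - i) f (cyc a) = cyc a.
  by rewrite /cyc -iterD key // (leq_trans (ltnW lt)).
have := fconnect_iter f (j - i).-1 (f (cyc a)).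
rewrite -iterSr prednK ?subn_gt0 // hc //.
Qed.

Lemma rep_conn c : fconnect f c (rep c) && fconnect f (rep c) c.
Proof.
rewrite /rep; case: pickP => [y //|/(_ c)]; by rewrite connect0.
Qed.

Lemma rep_eq c c' : fconnect f c c' -> fconnect f c' c -> rep c = rep c'.
Proof.
move=> h1 h2; rewrite /rep.
have E : (fun y => fconnect f c y && fconnect f y c) =1
         (fun y => fconnect f c' y && fconnect f y c').
  move=> y /=; apply/andP/andP => [[a b]|[a b]]; split.
  - exact: connect_trans h2 a.
  - exact: connect_trans b h1.
  - exact: connect_trans h1 a.
  - exact: connect_trans b h2.
rewrite (eq_pick E); case: pickP => //= /(_ c'); by rewrite !connect0.
Qed.

Lemma cyc_step a : cyc (f a) = f (cyc a).
Proof. by rewrite /cyc -iterSr iterS. Qed.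

Lemma rho_step a : rho (f a) = rho a.
Proof.
rewrite /rho cyc_step; symmetry; apply: rep_eq; first exact: fconnect1.
exact: cyc_cyclic.
Qed.

Lemma rho_conn a : fconnect f (rho a) (cyc a) && fconnect f (cyc a) (rho a).
Proof. by rewrite /rho andbC rep_conn. Qed.


Section Shift.
Variables (r c : T).
Hypotheses (hrc : fconnect f r c) (hcr : fconnect f c r).

Lemma loop_rc : iter (findex f c r + findex f r c) f r = r.
Proof. by rewrite iterD (iter_findex hrc) (iter_findex hcr). Qed.

Lemma shift_invol b v : fconnect f r v -> shiftv r c (~~ b) (shiftv r c b v) = v.
Proof.
move=> hv; rewrite -(iter_findex hv) /shiftv.
case: b => /=; rewrite -!iterD addnC iterD; first rewrite (addnC (findex f r c)); by rewrite loop_rc.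
Qed.

Lemma shift_fwd v : fconnect f r v ->
  iter (findex f r (f c)) f v = f (iter (findex f r c) f v).
Proof.
move=> hv; have hrc' : fconnect f r (f c) by apply: connect_trans hrc (fconnect1 _ _).
rewrite -(iter_findex hv) !(iter_comm _ (findex f r v)) (iter_findex hrc') (iter_findex hrc).
by rewrite -iterSr iterS.
Qed.

Lemma shift_bwd v : fconnect f r v -> fconnect f (f c) r ->
  iter (findex f (f c) r) f (f v) = iter (findex f c r) f v.
Proof.
move=> hv hcr'; have hcv : fconnect f c v by apply: connect_trans hcr hv.
rewrite -(iter_findex hcv) -iterS iterSr !(iter_comm _ (findex f c v)).
by rewrite (iter_findex hcr') (iter_findex hcr).
Qed.

End Shift.

Lemma okp_phi b a p : okp b p -> okp (~~ b) (phiT (rho a) (cyc a) p).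
Proof.
case: p => S x; rewrite /okp /phiT /= => /andP[/eqP ob /forallP hx]; apply/andP; split.
  case: ifP => ri.
    by move: ob; rewrite (cardsD1 (rho a)) ri add1n /= => <-; rewrite negbK.
  by rewrite cardsU1 ri add1n /= ob.
apply/forallP => q; rewrite ffunE; case: eqP => [->|_]; last exact: hx.
by rewrite /shiftv; case: ifP => _; apply: fconn_iter; apply: hx.
Qed.

Lemma phi_invol b a p : okp b p ->
  phiT (rho a) (cyc a) (phiT (rho a) (cyc a) p) = p.
Proof.
case/andP: (rho_conn a) => h1 h2.
case: p => S x; rewrite /okp /phiT /= => /andP[_ /forallP hx].
have mem : (rho a \in (if rho a \in S then S :\ rho a else rho a |: S)) = ~~ (rho a \in S).
  by case: ifP => ri; rewrite ?setD11 ?setU11.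
congr pair.
  by rewrite mem; case ri: (rho a \in S) => /=; [rewrite setD1K | rewrite setU1K ?ri].
apply/ffunP => q; rewrite !ffunE; case: eqP => [->|//]; rewrite mem.
exact: shift_invol.
Qed.

Lemma phi_step b a p : okp b p ->
  phiT (rho (f a)) (cyc (f a)) (stepT p) = stepT (phiT (rho a) (cyc a) p).
Proof.
rewrite rho_step cyc_step.
case/andP: (rho_conn a) => h1 h2.
have h3 : fconnect f (f (cyc a)) (rho a) by apply: connect_trans (cyc_cyclic a) h2.
case: p => S x; rewrite /okp /phiT /stepT /= => /andP[_ /forallP hx].
congr pair; apply/ffunP => q; rewrite !ffunE.
case: (q =P rho a) => [->|nq].
  case ri: (rho a \in S); rewrite ?setD11 ?setU11 /shiftv /=.
    exact: shift_bwd.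
  exact: shift_fwd.
have nq' : (q == rho a) = false by apply/eqP.
by case: (rho a \in S); rewrite !inE nq'.
Qed.

Lemma okp_step b p : okp b p -> okp b (stepT p).
Proof.
case: p => S x; rewrite /okp /stepT /= => /andP[-> /forallP hx] /=.
apply/forallP => q; rewrite ffunE; case: ifP => _; last exact: hx.
by have := fconn_iter _ _ 1 (hx q).
Qed.

Definition YT b := {p : PT | okp b p}.
Definition stepY b (y : YT b) : YT b := exist _ (stepT (sval y)) (okp_step _ _ (proj2_sig y)).
Arguments stepY {b}.
Definition FY b := @MkFDS (YT b) (@stepY b).

Definition PhiY b a (y : YT b) : YT (~~ b) :=
  exist _ (phiT (rho a) (cyc a) (sval y)) (okp_phi _ a _ (proj2_sig y)).
Arguments PhiY {b}.

Lemma PhiYK b a (y : YT b) : sval (PhiY a (PhiY a y)) = sval y.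
Proof. by rewrite /= (phi_invol _ a _ (proj2_sig y)). Qed.

Lemma iso_YZ : fds_iso (fds_prod A (FY false)) (fds_prod A (FY true)).
Proof.
pose h (p : T * YT false) : T * YT true := (p.1, PhiY p.1 p.2).
pose k (p : T * YT true) : T * YT false := (p.1, PhiY p.1 p.2).
exists h; split.
  exists k.
    by case=> a y; rewrite /h /k /=; congr pair; apply: val_inj; exact: PhiYK.
  by case=> a y; rewrite /h /k /=; congr pair; apply: val_inj; exact: PhiYK.
case=> a y; rewrite /h /=; congr pair; apply: val_inj => /=.
exact: (phi_step _ a _ (proj2_sig y)).
Qed.

Lemma not_iso_YZ : (forall s : T, f s != s) -> ~ fds_iso (FY false) (FY true).
Proof.
move=> nf [h [_ hh]].
have ok0 : okp false (set0, [ffun q => q]).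
  rewrite /okp cards0 /=; apply/forallP => q; by rewrite ffunE connect0.
pose y0 : YT false := exist (fun p => okp false p) _ ok0.
have fy0 : stepY y0 = y0.
  apply: val_inj => /=; rewrite /stepT /=; congr pair.
  by apply/ffunP => q; rewrite !ffunE inE.
have := hh y0; rewrite /= fy0.
case: (h y0) => [[S x] okz] /= /(congr1 sval) /= [] /ffunP E.
move: okz; rewrite /okp /= => /andP[oS _].
have : 0 < #|S| by case: #|S| oS.
case/card_gt0P => q qS; move: (E q); rewrite !ffunE qS => e.
by move: (nf (x q)); rewrite -e eqxx.
Qed.

End NoFix.

Lemma dir2 A : cancellative A -> has_fixpoint A.
Proof.
move=> Hc; case: (boolP [exists s, dyn A s == s]) => [/existsP [s /eqP hs]|Hn].
  by exists s.
exfalso; apply: (not_iso_YZ A).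
  by move=> s; move/existsPn: Hn; apply.
exact: Hc (iso_YZ A).
Qed.

Theorem mainTheorem1 (A : FDS) : cancellative A <-> has_fixpoint A.
Proof. split; [exact: dir2 | exact: dir1]. Qed.
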